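(* Let $\sigma(x)=1/(1+e^{-x})$, let $a,\beta_n,B_n,\gamma_n^*\ge1$, $K_n,L,r,n\in\mathbb{N}$, and let $f_{\mathbf{w}}$ be the network described in the context. Let $(X_1,Y_1),\dots,(X_n,Y_n)\in\mathbb{R}^d\times\mathbb{R}$ with $X_i\in[-a,a]^d$ and $|Y_i|\le\beta_n$ for $i=1,\dots,n$, and let $F_n(\mathbf{w})=\frac1n\sum_{i=1}^n|Y_i-f_{\mathbf{w}}(X_i)|^2$. Assume $K_n\gamma_n^*\ge\beta_n$, and let $\mathbf{w}$ satisfy $|w^{(L)}_{1,1,k}|\le\gamma_n^*$ for all $k$ and $|w^{(l)}_{k,i,j}|\le B_n$ for all $k,i,j$ and $l\in\{1,\dots,L-1\}$. Then there is a constant $c_{14}=c_{14}(d,L,r,a)>0$ such that $$\|\nabla_{\mathbf{w}}F_n(\mathbf{w})\|\le c_{14}\,K_n^{3/2}(\gamma_n^* )^2B_n^L.$$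
   Context: For a weight vector $\mathbf{w}$, $f_{\mathbf{w}}(x)=\sum_{j=1}^{K_n}w^{(L)}_{1,1,j}f^{(L)}_{j,1}(x)$, where for $k\in\{1,\dots,K_n\}$, $i\in\{1,\dots,r\}$: $f^{(l)}_{k,i}(x)=\sigma\big(\sum_{j=1}^rw^{(l-1)}_{k,i,j}f^{(l-1)}_{k,j}(x)+w^{(l-1)}_{k,i,0}\big)$ for $l=2,\dots,L$ and $f^{(1)}_{k,i}(x)=\sigma\big(\sum_{j=1}^dw^{(0)}_{k,i,j}x^{(j)}+w^{(0)}_{k,i,0}\big)$. The gradient is with respect to all weights; $\|\cdot\|$ is the Euclidean norm. *)

(* Defs.v *)
From Stdlib Require Import Reals Lra.
From Coquelicot Require Import Coquelicot.
Open Scope R_scope.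

Definition sigma (x : R) : R := 1 / (1 + exp (- x)).

(* sumR m f = f 1 + ... + f m  (1-based, empty for m = 0) *)
Fixpoint sumR (m : nat) (f : nat -> R) : R :=
  match m with
  | O => 0
  | S m' => sumR m' f + f (S m')
  end.

Definition sumR0 (m : nat) (f : nat -> R) : R := f O + sumR m f.

(* Weights: w l k i j  stands for  w^{(l)}_{k,i,j}  (1-based k,i; j = 0 is the bias).
   Inputs: x j  stands for  x^{(j)}, j = 1..d. *)
Definition weights := nat -> nat -> nat -> nat -> R.

(* layer d r w x l k i = f^{(l)}_{k,i}(x) for l >= 1 (value 0 for l = 0, unused) *)
Fixpoint layer (d r : nat) (w : weights) (x : nat -> R) (l k i : nat) : R :=
  match l with
  | O => 0
  | S O => sigma (sumR d (fun j => w O k i j * x j) + w O k i O)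
  | S (S _ as l') =>
      sigma (sumR r (fun j => w l' k i j * layer d r w x l' k j) + w l' k i O)
  end.

Definition fnet (d r K L : nat) (w : weights) (x : nat -> R) : R :=
  sumR K (fun j => w L 1%nat 1%nat j * layer d r w x L j 1%nat).

Definition emp_risk (d r K L n : nat) (X : nat -> nat -> R) (Y : nat -> R)
  (w : weights) : R :=
  (1 / INR n) * sumR n (fun i => (Y i - fnet d r K L w (X i)) ^ 2).

Definition upd (w : weights) (l k i j : nat) (t : R) : weights :=
  fun l0 k0 i0 j0 =>
    if (Nat.eqb l0 l && Nat.eqb k0 k && Nat.eqb i0 i && Nat.eqb j0 j)%bool
    then t else w l0 k0 i0 j0.

Definition partial (F : weights -> R) (w : weights) (l k i j : nat) : R :=
  Derive (fun t => F (upd w l k i j t)) (w l k i j).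

Definition grad_norm (d r K L : nat) (F : weights -> R) (w : weights) : R :=
  sqrt (
    sumR K (fun k => sumR r (fun i => sumR0 d (fun j => (partial F w O k i j) ^ 2)))
  + sumR (L - 1) (fun l => sumR K (fun k => sumR r (fun i =>
        sumR0 r (fun j => (partial F w l k i j) ^ 2))))
  + sumR K (fun j => (partial F w L 1%nat 1%nat j) ^ 2)).

(* Main.v *)
Require Import Defs.
From Stdlib Require Import Reals Lra Lia FunctionalExtensionality.
From Coquelicot Require Import Coquelicot.
Open Scope R_scope.

Lemma D_plus (f g : R -> R) x a b :
  is_derive f x a -> is_derive g x b -> is_derive (fun t => f t + g t) x (a + b).
Proof. intros; apply (is_derive_plus f g x a b); auto. Qed.

Lemma D_mult (f g : R -> R) x a b :
  is_derive f x a -> is_derive g x b ->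
  is_derive (fun t => f t * g t) x (a * g x + f x * b).
Proof. intros; apply (is_derive_mult f g x a b); auto. intros; apply Rmult_comm. Qed.

Lemma D_comp (f g : R -> R) x a b :
  is_derive f (g x) a -> is_derive g x b -> is_derive (fun t => f (g t)) x (b * a).
Proof. intros; apply (is_derive_comp f g x a b); auto. Qed.

Lemma D_const (c x : R) : is_derive (fun _ => c) x 0.
Proof. apply (is_derive_const c x). Qed.

Lemma D_id (x : R) : is_derive (fun t => t) x 1.
Proof. apply (is_derive_id x). Qed.

Definition dsig (y : R) := exp (- y) / (1 + exp (- y)) ^ 2.

Lemma D_sigma y : is_derive Defs.sigma y (dsig y).
Proof.
  unfold Defs.sigma, dsig. assert (0 < exp (-y)) by apply exp_pos.
  auto_derive. lra. field. lra.
Qed.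

Lemma dsig_bound y : Rabs (dsig y) <= 1.
Proof.
  unfold dsig. assert (h: 0 < exp (-y)) by apply exp_pos.
  set (e := exp (-y)) in *.
  rewrite Rabs_pos_eq.
  - apply Rmult_le_reg_r with ((1+e)^2). nra. unfold Rdiv. rewrite Rmult_assoc, Rinv_l. nra. nra.
  - apply Rle_trans with 0. lra. left. apply Rdiv_lt_0_compat; nra.
Qed.

Lemma sigma_bound y : Rabs (Defs.sigma y) <= 1.
Proof.
  unfold Defs.sigma. assert (h: 0 < exp (-y)) by apply exp_pos.
  rewrite Rabs_pos_eq.
  - apply Rmult_le_reg_r with (1 + exp (-y)). lra. unfold Rdiv. rewrite Rmult_assoc, Rinv_l; lra.
  - left. apply Rdiv_lt_0_compat; lra.
Qed.

Lemma sumR_ext m f g : (forall j, (1 <= j <= m)%nat -> f j = g j) -> sumR m f = sumR m g.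
Proof.
  induction m; simpl; intros; auto. rewrite IHm, (H (S m)); auto; intros; try lia. apply H; lia.
Qed.

Lemma sumR_zero m f : (forall j, (1 <= j <= m)%nat -> f j = 0) -> sumR m f = 0.
Proof.
  induction m; simpl; intros; auto. rewrite IHm, (H (S m)); try lia. ring. intros; apply H; lia.
Qed.

Lemma sumR_bound m f b : (forall j, (1 <= j <= m)%nat -> Rabs (f j) <= b) ->
  Rabs (sumR m f) <= INR m * b.
Proof.
  induction m; cbn [sumR]; intros.
  - rewrite Rabs_R0. simpl; lra.
  - rewrite S_INR. eapply Rle_trans. apply Rabs_triang.
    assert (Rabs (sumR m f) <= INR m * b) by (apply IHm; intros; apply H; lia).
    assert (Rabs (f (S m)) <= b) by (apply H; lia). lra.
Qed.

Lemma sumR_single m f j0 b : (forall j, (1 <= j <= m)%nat -> j <> j0 -> f j = 0) ->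
  (forall j, (1 <= j <= m)%nat -> Rabs (f j) <= b) -> 0 <= b ->
  Rabs (sumR m f) <= b.
Proof.
  induction m; simpl; intros.
  - rewrite Rabs_R0. lra.
  - destruct (Nat.eq_dec (S m) j0).
    + rewrite sumR_zero. rewrite Rplus_0_l. apply H0; lia. intros; apply H; lia.
    + rewrite (H (S m)); try lia. rewrite Rplus_0_r. apply IHm; auto.
      intros; apply H; lia. intros; apply H0; lia.
Qed.

Lemma D_sum m (g : nat -> R -> R) x :
  (forall j, (1 <= j <= m)%nat -> ex_derive (g j) x) ->
  is_derive (fun t => sumR m (fun j => g j t)) x (sumR m (fun j => Derive (g j) x)).
Proof.
  induction m; simpl; intros.
  - apply D_const.
  - apply D_plus. apply IHm; intros; apply H; lia. apply Derive_correct. apply H; lia.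
Qed.

Lemma D_sum' m (g : nat -> R -> R) dg x :
  (forall j, (1 <= j <= m)%nat -> is_derive (g j) x (dg j)) ->
  is_derive (fun t => sumR m (fun j => g j t)) x (sumR m dg).
Proof.
  induction m; simpl; intros.
  - apply D_const.
  - apply D_plus. apply IHm; intros; apply H; lia. apply H; lia.
Qed.

Definition dl l0 k0 i0 j0 l k i j : R :=
  if (Nat.eqb l l0 && Nat.eqb k k0 && Nat.eqb i i0 && Nat.eqb j j0)%bool then 1 else 0.

Lemma upd_D w l0 k0 i0 j0 l k i j x :
  is_derive (fun t => upd w l0 k0 i0 j0 t l k i j) x (dl l0 k0 i0 j0 l k i j).
Proof.
  unfold upd, dl. destruct (Nat.eqb l l0 && Nat.eqb k k0 && Nat.eqb i i0 && Nat.eqb j j0)%bool.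
  apply D_id. apply D_const.
Qed.

Lemma upd_id w l0 k0 i0 j0 : upd w l0 k0 i0 j0 (w l0 k0 i0 j0) = w.
Proof.
  apply functional_extensionality; intro l; apply functional_extensionality; intro k;
  apply functional_extensionality; intro i; apply functional_extensionality; intro j.
  unfold upd. destruct (Nat.eqb l l0) eqn:E1; destruct (Nat.eqb k k0) eqn:E2;
  destruct (Nat.eqb i i0) eqn:E3; destruct (Nat.eqb j j0) eqn:E4; simpl; auto.
  apply Nat.eqb_eq in E1, E2, E3, E4. subst. reflexivity.
Qed.

Lemma dl_zero l0 k0 i0 j0 l k i j : (l <> l0 \/ k <> k0) -> dl l0 k0 i0 j0 l k i j = 0.
Proof.
  unfold dl; intros [H|H].
  - apply Nat.eqb_neq in H. rewrite H. reflexivity.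
  - apply Nat.eqb_neq in H. rewrite H. rewrite Bool.andb_false_r. reflexivity.
Qed.

Lemma dl_abs l0 k0 i0 j0 l k i j : Rabs (dl l0 k0 i0 j0 l k i j) <= 1.
Proof.
  unfold dl. destruct (_ && _)%bool; [rewrite Rabs_R1|rewrite Rabs_R0]; lra.
Qed.

Lemma layer_bound d r w x n k i : Rabs (layer d r w x (S n) k i) <= 1.
Proof. destruct n; apply sigma_bound. Qed.

Fixpoint M0 (d r : nat) (a B : R) (n : nat) : R :=
  match n with
  | O => INR d * a + 1
  | S n' => INR r * (1 + B * M0 d r a B n') + 1
  end.

Lemma M0_nonneg d r a B n : 0 <= a -> 0 <= B -> 0 <= M0 d r a B n.
Proof.
  intros. induction n; simpl M0.
  - pose proof (pos_INR d). nra.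
  - pose proof (pos_INR r). assert (0 <= B * M0 d r a B n) by (apply Rmult_le_pos; lra). nra.
Qed.

Lemma M0_le d r a B n : 0 <= a -> 1 <= B -> M0 d r a B n <= M0 d r a 1 n * B ^ n.
Proof.
  intros. induction n; simpl M0.
  - simpl; lra.
  - pose proof (pos_INR r). pose proof (M0_nonneg d r a 1 n ltac:(lra) ltac:(lra)).
    assert (1 <= B ^ n) by (apply pow_R1_Rle; lra).
    assert (B * M0 d r a B n <= B * (M0 d r a 1 n * B ^ n)) by (apply Rmult_le_compat_l; lra).
    simpl pow.
    set (m := M0 d r a 1 n) in *. set (p := B ^ n) in *.
    assert (1 <= B * p) by nra.
    assert (INR r * (1 + B * M0 d r a B n) <= INR r * (1 + B * (m * p))) by (apply Rmult_le_compat_l; lra).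
    assert (INR r * (1 + B * (m*p)) + 1 <= (INR r * (1 + 1 * m) + 1) * (B * p)); [|lra].
    assert (INR r * (B * (m*p)) = INR r * m * (B * p)) by ring.
    assert (INR r <= INR r * (B*p)) by nra.
    assert (0 <= INR r * m) by nra.
    nra.
Qed.

Lemma layer_D d r w x l0 k0 i0 j0 K L a B (k : nat) :
  (forall j, (1<=j<=d)%nat -> Rabs (x j) <= a) ->
  (forall l k i j, (1 <= l <= L - 1)%nat -> (1 <= k <= K)%nat -> (1 <= i <= r)%nat ->
      (0 <= j <= r)%nat -> Rabs (w l k i j) <= B) ->
  0 <= a -> 1 <= B ->
  forall n i,
   ex_derive (fun t => layer d r (upd w l0 k0 i0 j0 t) x (S n) k i) (w l0 k0 i0 j0) /\
   ((k <> k0 \/ (S n <= l0)%nat) ->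
      Derive (fun t => layer d r (upd w l0 k0 i0 j0 t) x (S n) k i) (w l0 k0 i0 j0) = 0) /\
   ((1 <= k <= K)%nat -> (1<=i<=r)%nat -> (S n <= L)%nat ->
      Rabs (Derive (fun t => layer d r (upd w l0 k0 i0 j0 t) x (S n) k i) (w l0 k0 i0 j0))
        <= M0 d r a B n).
Proof.
  intros Hx Hw Ha HB n. set (t0 := w l0 k0 i0 j0).
  induction n; intros i.
  - set (G := fun t => sumR d (fun j => upd w l0 k0 i0 j0 t 0%nat k i j * x j)
                       + upd w l0 k0 i0 j0 t 0%nat k i 0%nat).
    set (hD := sumR d (fun j => dl l0 k0 i0 j0 0 k i j * x j + upd w l0 k0 i0 j0 t0 0%nat k i j * 0)
               + dl l0 k0 i0 j0 0 k i 0).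
    assert (Hd : is_derive (fun t => Defs.sigma (G t)) t0 (hD * dsig (G t0))).
    { apply D_comp. apply D_sigma. apply D_plus.
      - apply (D_sum' d (fun j t => upd w l0 k0 i0 j0 t 0%nat k i j * x j)).
        intros. apply D_mult. apply upd_D. apply D_const.
      - apply upd_D. }
    assert (E: Derive (fun t => layer d r (upd w l0 k0 i0 j0 t) x 1 k i) t0 = hD * dsig (G t0))
      by (apply is_derive_unique; exact Hd).
    rewrite E.
    split; [exists (hD * dsig (G t0)); exact Hd|]. split.
    + intros Hc. assert (hD = 0); [|rewrite H; ring].
      unfold hD. rewrite sumR_zero. rewrite dl_zero. ring. lia.
      intros. rewrite dl_zero. ring. lia.
    + intros _ _ _. rewrite Rabs_mult. pose proof (dsig_bound (G t0)).
      assert (Rabs hD <= INR d * a + 1).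
      { unfold hD. eapply Rle_trans. apply Rabs_triang.
        pose proof (dl_abs l0 k0 i0 j0 0 k i 0).
        assert (Rabs (sumR d (fun j => dl l0 k0 i0 j0 0 k i j * x j + upd w l0 k0 i0 j0 t0 0%nat k i j * 0)) <= INR d * a); [|lra].
        apply sumR_bound. intros. rewrite Rmult_0_r, Rplus_0_r, Rabs_mult.
        pose proof (dl_abs l0 k0 i0 j0 0 k i j). pose proof (Hx j H1). pose proof (Rabs_pos (x j)).
        pose proof (Rabs_pos (dl l0 k0 i0 j0 0 k i j)). nra. }
      simpl M0. pose proof (Rabs_pos hD). pose proof (Rabs_pos (dsig (G t0))). nra.
  - set (Lf := fun j t => layer d r (upd w l0 k0 i0 j0 t) x (S n) k j).
    set (G := fun t => sumR r (fun j => upd w l0 k0 i0 j0 t (S n) k i j * Lf j t)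
                       + upd w l0 k0 i0 j0 t (S n) k i 0%nat).
    set (hD := sumR r (fun j => dl l0 k0 i0 j0 (S n) k i j * Lf j t0
                     + upd w l0 k0 i0 j0 t0 (S n) k i j * Derive (Lf j) t0)
               + dl l0 k0 i0 j0 (S n) k i 0).
    assert (Hd : is_derive (fun t => Defs.sigma (G t)) t0 (hD * dsig (G t0))).
    { apply D_comp. apply D_sigma. apply D_plus.
      - apply (D_sum' r (fun j t => upd w l0 k0 i0 j0 t (S n) k i j * Lf j t)).
        intros. apply D_mult. apply upd_D. apply Derive_correct. apply (IHn j).
      - apply upd_D. }
    assert (E: Derive (fun t => layer d r (upd w l0 k0 i0 j0 t) x (S (S n)) k i) t0 = hD * dsig (G t0))
      by (apply is_derive_unique; exact Hd).
    rewrite E.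
    split; [exists (hD * dsig (G t0)); exact Hd|]. split.
    + intros Hc. assert (hD = 0); [|rewrite H; ring].
      unfold hD. rewrite sumR_zero. rewrite dl_zero. ring. lia.
      intros. rewrite dl_zero by lia. destruct (IHn j) as [_ [Z _]]. unfold Lf. rewrite Z by lia. ring.
    + intros Hk Hi HL. rewrite Rabs_mult. pose proof (dsig_bound (G t0)).
      pose proof (M0_nonneg d r a B n Ha ltac:(lra)).
      assert (Rabs hD <= INR r * (1 + B * M0 d r a B n) + 1).
      { unfold hD. eapply Rle_trans. apply Rabs_triang.
        pose proof (dl_abs l0 k0 i0 j0 (S n) k i 0).
        assert (Rabs (sumR r (fun j => dl l0 k0 i0 j0 (S n) k i j * Lf j t0
                     + upd w l0 k0 i0 j0 t0 (S n) k i j * Derive (Lf j) t0)) <= INR r * (1 + B * M0 d r a B n)); [|lra].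
        apply sumR_bound. intros. eapply Rle_trans. apply Rabs_triang. rewrite !Rabs_mult.
        pose proof (dl_abs l0 k0 i0 j0 (S n) k i j).
        pose proof (layer_bound d r (upd w l0 k0 i0 j0 t0) x n k j).
        assert (Rabs (upd w l0 k0 i0 j0 t0 (S n) k i j) <= B).
        { unfold t0; rewrite upd_id. apply Hw; lia. }
        destruct (IHn j) as [_ [_ Bd]]. specialize (Bd Hk H2 ltac:(lia)).
        pose proof (Rabs_pos (Lf j t0)). pose proof (Rabs_pos (dl l0 k0 i0 j0 (S n) k i j)).
        pose proof (Rabs_pos (upd w l0 k0 i0 j0 t0 (S n) k i j)). pose proof (Rabs_pos (Derive (Lf j) t0)).
        unfold Lf in *.
        assert (Rabs (dl l0 k0 i0 j0 (S n) k i j) * Rabs (layer d r (upd w l0 k0 i0 j0 t0) x (S n) k j) <= 1) by nra.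
        assert (Rabs (upd w l0 k0 i0 j0 t0 (S n) k i j) *
                Rabs (Derive (fun t => layer d r (upd w l0 k0 i0 j0 t) x (S n) k j) t0) <= B * M0 d r a B n)
          by (apply Rmult_le_compat; auto).
        lra. }
      simpl M0. pose proof (Rabs_pos hD). pose proof (Rabs_pos (dsig (G t0))).
      assert (Rabs hD * Rabs (dsig (G t0)) <= Rabs hD * 1) by (apply Rmult_le_compat_l; lra). lra.
Qed.

Lemma fnet_D d r w x l0 k0 i0 j0 K L a B gamma :
  (forall j, (1<=j<=d)%nat -> Rabs (x j) <= a) ->
  (forall l k i j, (1 <= l <= L - 1)%nat -> (1 <= k <= K)%nat -> (1 <= i <= r)%nat ->
      (0 <= j <= r)%nat -> Rabs (w l k i j) <= B) ->
  (forall k, (1 <= k <= K)%nat -> Rabs (w L 1%nat 1%nat k) <= gamma) ->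
  0 <= a -> 1 <= B -> 1 <= gamma -> (1 <= L)%nat ->
  ex_derive (fun t => fnet d r K L (upd w l0 k0 i0 j0 t) x) (w l0 k0 i0 j0) /\
  ((l0 <= L - 1)%nat -> (1 <= k0 <= K)%nat -> (1 <= i0 <= r)%nat ->
     Rabs (Derive (fun t => fnet d r K L (upd w l0 k0 i0 j0 t) x) (w l0 k0 i0 j0))
       <= gamma * M0 d r a B (L - 1)) /\
  (l0 = L ->
     Rabs (Derive (fun t => fnet d r K L (upd w l0 k0 i0 j0 t) x) (w l0 k0 i0 j0)) <= 1).
Proof.
  intros Hx Hw Hg Ha HB Hga HL. destruct L as [|m]; [lia|].
  replace (S m - 1)%nat with m in * by lia.
  pose proof (layer_D d r w x l0 k0 i0 j0 K (S m) a B) as LD.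
  replace (S m - 1)%nat with m in LD by lia.
  set (t0 := w l0 k0 i0 j0) in *.
  set (Lk := fun k t => layer d r (upd w l0 k0 i0 j0 t) x (S m) k 1%nat).
  set (hD := sumR K (fun k => dl l0 k0 i0 j0 (S m) 1 1 k * Lk k t0
                   + upd w l0 k0 i0 j0 t0 (S m) 1%nat 1%nat k * Derive (Lk k) t0)).
  assert (Hd : is_derive (fun t => fnet d r K (S m) (upd w l0 k0 i0 j0 t) x) t0 hD).
  { unfold fnet. apply (D_sum' K (fun k t => upd w l0 k0 i0 j0 t (S m) 1%nat 1%nat k * Lk k t)).
    intros k Hk. apply D_mult. apply upd_D. apply Derive_correct.
    apply (LD k Hx Hw Ha HB m 1%nat). }
  assert (E: Derive (fun t => fnet d r K (S m) (upd w l0 k0 i0 j0 t) x) t0 = hD)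
    by (apply is_derive_unique; exact Hd). rewrite E.
  split; [exists hD; exact Hd|]. split.
  - intros Hl Hk Hi. unfold hD. apply sumR_single with (j0 := k0).
    + intros k Hk' Hne. rewrite dl_zero by lia.
      destruct (LD k Hx Hw Ha HB m 1%nat) as [_ [Z _]]. unfold Lk. rewrite Z by lia. ring.
    + intros k Hk'. rewrite dl_zero by lia. rewrite Rmult_0_l, Rplus_0_l, Rabs_mult.
      destruct (LD k Hx Hw Ha HB m 1%nat) as [_ [_ Bd]]. specialize (Bd Hk' ltac:(lia) ltac:(lia)).
      unfold t0; rewrite upd_id. apply Rmult_le_compat; try apply Rabs_pos. apply Hg; auto.
      exact Bd.
    + pose proof (M0_nonneg d r a B m Ha ltac:(lra)). nra.
  - intros Hl. unfold hD. apply sumR_single with (j0 := j0).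
    + intros k Hk' Hne. unfold dl. rewrite (proj2 (Nat.eqb_neq k j0) Hne).
      rewrite Bool.andb_false_r. 
      destruct (LD k Hx Hw Ha HB m 1%nat) as [_ [Z _]]. unfold Lk. rewrite Z by lia. ring.
    + intros k Hk'. destruct (LD k Hx Hw Ha HB m 1%nat) as [_ [Z _]]. unfold Lk. rewrite Z by lia.
      rewrite Rmult_0_r, Rplus_0_r, Rabs_mult.
      pose proof (dl_abs l0 k0 i0 j0 (S m) 1 1 k). pose proof (layer_bound d r (upd w l0 k0 i0 j0 t0) x m k 1).
      pose proof (Rabs_pos (dl l0 k0 i0 j0 (S m) 1 1 k)). pose proof (Rabs_pos (layer d r (upd w l0 k0 i0 j0 t0) x (S m) k 1)).
      nra.
    + lra.
Qed.

Lemma fnet_bound d r w x K L gamma : (1 <= L)%nat ->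
  (forall k, (1 <= k <= K)%nat -> Rabs (w L 1%nat 1%nat k) <= gamma) ->
  Rabs (fnet d r K L w x) <= INR K * gamma.
Proof.
  intros HL Hg. destruct L as [|m]; [lia|]. unfold fnet. apply sumR_bound.
  intros. rewrite Rabs_mult. pose proof (layer_bound d r w x m j 1).
  pose proof (Hg j H). pose proof (Rabs_pos (w (S m) 1%nat 1%nat j)).
  pose proof (Rabs_pos (layer d r w x (S m) j 1)). nra.
Qed.

Lemma risk_D d r K L n X Y w l0 k0 i0 j0 beta gamma b :
  (forall i, (1 <= i <= n)%nat ->
     ex_derive (fun t => fnet d r K L (upd w l0 k0 i0 j0 t) (X i)) (w l0 k0 i0 j0) /\
     Rabs (Derive (fun t => fnet d r K L (upd w l0 k0 i0 j0 t) (X i)) (w l0 k0 i0 j0)) <= b) ->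
  (forall i, (1 <= i <= n)%nat -> Rabs (Y i) <= beta) ->
  (forall i, (1 <= i <= n)%nat -> Rabs (fnet d r K L w (X i)) <= INR K * gamma) ->
  0 <= b -> 0 <= beta + INR K * gamma ->
  Rabs (partial (emp_risk d r K L n X Y) w l0 k0 i0 j0) <= 2 * (beta + INR K * gamma) * b.
Proof.
  intros HD HY HF Hb Hbg. unfold partial, emp_risk.
  set (t0 := w l0 k0 i0 j0).
  set (Fi := fun i t => fnet d r K L (upd w l0 k0 i0 j0 t) (X i)).
  set (dg := fun i => INR 2 * (0 - Derive (Fi i) t0) * (Y i - Fi i t0) ^ 1).
  assert (Hd : is_derive (fun t => 1 / INR n * sumR n (fun i => (Y i - Fi i t) ^ 2)) t0
                 (1 / INR n * sumR n dg)).
  { apply is_derive_scal. apply (D_sum' n (fun i t => (Y i - Fi i t) ^ 2)).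
    intros i Hi. unfold dg. apply (is_derive_pow (fun t => Y i - Fi i t) 2 t0).
    apply (is_derive_minus (fun _ => Y i) (Fi i) t0 0 (Derive (Fi i) t0)).
    apply D_const. apply Derive_correct. apply HD; auto. }
  assert (E: Derive (fun t => 1 / INR n * sumR n (fun i => (Y i - fnet d r K L (upd w l0 k0 i0 j0 t) (X i)) ^ 2)) t0 = 1 / INR n * sumR n dg)
    by (apply is_derive_unique; exact Hd). rewrite E.
  destruct n as [|n].
  - simpl. rewrite Rmult_0_r, Rabs_R0. nra.
  - assert (Hs : Rabs (sumR (S n) dg) <= INR (S n) * (2 * (beta + INR K * gamma) * b)).
    { apply sumR_bound. intros i Hi. unfold dg. simpl pow. rewrite Rmult_1_r.
      rewrite !Rabs_mult. unfold Fi; rewrite upd_id. fold (Fi i).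
      destruct (HD i Hi) as [_ Hb']. pose proof (HY i Hi). pose proof (HF i Hi).
      replace (Rabs (INR 2)) with 2 by (rewrite Rabs_pos_eq; simpl; lra).
      rewrite Rminus_0_l, Rabs_Ropp.
      assert (Rabs (Y i - fnet d r K L w (X i)) <= beta + INR K * gamma).
      { unfold Rminus. eapply Rle_trans. apply Rabs_triang. rewrite Rabs_Ropp. lra. }
      pose proof (Rabs_pos (Y i - fnet d r K L w (X i))). pose proof (Rabs_pos (Derive (Fi i) t0)).
      fold t0 in Hb'. 
      assert (Rabs (Derive (Fi i) t0) * Rabs (Y i - fnet d r K L w (X i)) <= b * (beta + INR K * gamma))
        by (apply Rmult_le_compat; auto).
      lra. }
    rewrite Rabs_mult. pose proof (lt_0_INR (S n) ltac:(lia)).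
    rewrite Rabs_pos_eq by (left; apply Rdiv_lt_0_compat; lra).
    apply Rmult_le_reg_l with (INR (S n)). lra.
    replace (INR (S n) * (1 / INR (S n) * Rabs (sumR (S n) dg))) with (Rabs (sumR (S n) dg)) by (field; lra).
    exact Hs.
Qed.

Lemma sumR0_bound m f b : (forall j, (j <= m)%nat -> Rabs (f j) <= b) ->
  Rabs (sumR0 m f) <= (INR m + 1) * b.
Proof.
  intros H. unfold sumR0. eapply Rle_trans. apply Rabs_triang.
  assert (Rabs (sumR m f) <= INR m * b) by (apply sumR_bound; intros; apply H; lia).
  pose proof (H 0%nat ltac:(lia)). lra.
Qed.

Lemma sq_bound p P : Rabs p <= P -> Rabs (p ^ 2) <= P ^ 2.
Proof.
  intros. rewrite <- RPow_abs. pose proof (Rabs_pos p). simpl. nra.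
Qed.

Theorem lemma3 :
  forall (d L r : nat) (a : R),
    (1 <= L)%nat -> 1 <= a ->
    exists c14 : R, 0 < c14 /\
      forall (K n : nat) (beta B gamma : R)
             (X : nat -> nat -> R) (Y : nat -> R) (w : weights),
        1 <= beta -> 1 <= B -> 1 <= gamma ->
        (forall i j, (1 <= i <= n)%nat -> (1 <= j <= d)%nat -> Rabs (X i j) <= a) ->
        (forall i, (1 <= i <= n)%nat -> Rabs (Y i) <= beta) ->
        INR K * gamma >= beta ->
        (forall k, (1 <= k <= K)%nat -> Rabs (w L 1%nat 1%nat k) <= gamma) ->
        (forall l k i j, (1 <= l <= L - 1)%nat -> (1 <= k <= K)%nat ->
           (1 <= i <= r)%nat -> (0 <= j <= r)%nat -> Rabs (w l k i j) <= B) ->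
        grad_norm d r K L (emp_risk d r K L n X Y) w
          <= c14 * (INR K * sqrt (INR K)) * gamma ^ 2 * B ^ L.
Proof.
  intros d L r a HL Ha.
  set (C := M0 d r a 1 (L - 1)).
  set (N := INR r * (INR d + 1) + INR (L - 1) * (INR r * (INR r + 1))).
  assert (HC : 0 <= C) by (apply M0_nonneg; lra).
  assert (HN : 0 <= N).
  { unfold N. pose proof (pos_INR r). pose proof (pos_INR d). pose proof (pos_INR (L-1)).
    assert (0 <= INR r * (INR d + 1)) by nra. assert (0 <= INR r * (INR r + 1)) by nra. nra. }
  exists (16 * (C ^ 2 * N + 1)). split.
  { assert (0 <= C^2 * N) by (apply Rmult_le_pos; auto; apply pow2_ge_0). lra. }
  intros K n beta B gamma X Y w Hbeta HB Hg HX HY HKg HwL Hw.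
  assert (HK : 1 <= INR K) by (destruct K; simpl in HKg; [lra|]; pose proof (pos_INR K); rewrite S_INR; lra).
  set (kk := INR K) in *.
  set (P := 4 * kk * gamma ^ 2 * C * B ^ (L - 1)).
  set (P3 := 4 * kk * gamma).
  assert (Hbg : beta + kk * gamma <= 2 * kk * gamma) by lra.
  assert (HP1 : forall l0 k0 i0 j0, (l0 <= L - 1)%nat -> (1 <= k0 <= K)%nat -> (1 <= i0 <= r)%nat ->
            Rabs (partial (emp_risk d r K L n X Y) w l0 k0 i0 j0) <= P).
  { intros l0 k0 i0 j0 Hl Hk Hi.
    pose proof (M0_nonneg d r a B (L-1) ltac:(lra) ltac:(lra)).
    eapply Rle_trans.
    apply (risk_D d r K L n X Y w l0 k0 i0 j0 beta gamma (gamma * M0 d r a B (L - 1))).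
    - intros i Hi'. assert (Hxi: forall j, (1<=j<=d)%nat -> Rabs (X i j) <= a) by (intros; apply HX; auto).
      destruct (fnet_D d r w (X i) l0 k0 i0 j0 K L a B gamma Hxi Hw HwL ltac:(lra) HB Hg HL) as [E1 [E2 _]].
      split; auto.
    - auto.
    - intros. apply fnet_bound; auto.
    - nra.
    - fold kk; lra.
    - fold kk. pose proof (M0_le d r a B (L-1) ltac:(lra) HB). fold C in H0.
      unfold P. 
      assert (2 * (beta + kk * gamma) <= 4 * kk * gamma) by lra.
      assert (0 <= 2 * (beta + kk * gamma)) by nra.
      assert (gamma * M0 d r a B (L - 1) <= gamma * (C * B ^ (L - 1))) by (apply Rmult_le_compat_l; lra).
      assert (2 * (beta + kk * gamma) * (gamma * M0 d r a B (L - 1)) <= 4 * kk * gamma * (gamma * (C * B ^ (L - 1)))).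
      { apply Rmult_le_compat; auto. nra. }
      replace (4 * kk * gamma ^ 2 * C * B ^ (L - 1)) with (4 * kk * gamma * (gamma * (C * B ^ (L - 1)))) by ring.
      lra. }
  assert (HP3 : forall j0, Rabs (partial (emp_risk d r K L n X Y) w L 1%nat 1%nat j0) <= P3).
  { intros j0. eapply Rle_trans.
    apply (risk_D d r K L n X Y w L 1%nat 1%nat j0 beta gamma 1).
    - intros i Hi'. assert (Hxi: forall j, (1<=j<=d)%nat -> Rabs (X i j) <= a) by (intros; apply HX; auto).
      destruct (fnet_D d r w (X i) L 1%nat 1%nat j0 K L a B gamma Hxi Hw HwL ltac:(lra) HB Hg HL) as [E1 [_ E3]].
      split; auto.
    - auto.
    - intros. apply fnet_bound; auto.
    - lra.
    - fold kk; lra.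
    - fold kk. unfold P3. lra. }
  unfold grad_norm.
  assert (B1 : Rabs (sumR K (fun k => sumR r (fun i => sumR0 d (fun j =>
              (partial (emp_risk d r K L n X Y) w 0 k i j) ^ 2))))
            <= kk * (INR r * ((INR d + 1) * P ^ 2))).
  { apply sumR_bound; intros k Hk. apply sumR_bound; intros i Hi. apply sumR0_bound; intros j Hj.
    apply sq_bound. apply HP1; lia. }
  assert (B2 : Rabs (sumR (L - 1) (fun l => sumR K (fun k => sumR r (fun i =>
        sumR0 r (fun j => (partial (emp_risk d r K L n X Y) w l k i j) ^ 2)))))
            <= INR (L - 1) * (kk * (INR r * ((INR r + 1) * P ^ 2)))).
  { apply sumR_bound; intros l Hl. apply sumR_bound; intros k Hk. apply sumR_bound; intros i Hi.
    apply sumR0_bound; intros j Hj. apply sq_bound. apply HP1; lia. }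
  assert (B3 : Rabs (sumR K (fun j => (partial (emp_risk d r K L n X Y) w L 1%nat 1%nat j) ^ 2))
            <= kk * P3 ^ 2).
  { apply sumR_bound; intros j Hj. apply sq_bound. apply HP3. }
  set (S1 := sumR K _) in *. set (S2 := sumR (L - 1) _) in *. set (S3 := sumR K _) in B3 |- *.
  assert (HBL : B ^ L = B * B ^ (L - 1)).
  { destruct L; [lia|]. simpl. rewrite Nat.sub_0_r. ring. }
  rewrite HBL. set (bb := B ^ (L - 1)) in *.
  assert (Hbb : 1 <= bb) by (apply pow_R1_Rle; lra).
  set (c := 16 * (C ^ 2 * N + 1)).
  set (Z := kk ^ 3 * gamma ^ 4 * bb ^ 2 * B ^ 2).
  assert (HS : S1 + S2 + S3 <= c * Z).
  { assert (S1 + S2 + S3 <= N * kk * P ^ 2 + kk * P3 ^ 2).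
    { pose proof (Rle_abs S1). pose proof (Rle_abs S2). pose proof (Rle_abs S3).
      assert (kk * (INR r * ((INR d + 1) * P ^ 2)) + INR (L - 1) * (kk * (INR r * ((INR r + 1) * P ^ 2)))
              = N * kk * P ^ 2) by (unfold N; ring). lra. }
    assert (E1 : N * kk * P ^ 2 = 16 * (N * C ^ 2) * (kk ^ 3 * gamma ^ 4 * bb ^ 2)) by (unfold P; ring).
    assert (E2 : kk * P3 ^ 2 = 16 * kk ^ 3 * gamma ^ 2) by (unfold P3; ring).
    assert (Hk3 : 1 <= kk ^ 3) by (apply pow_R1_Rle; lra).
    assert (Hg2 : 1 <= gamma ^ 2) by (apply pow_R1_Rle; lra).
    assert (HB2 : 1 <= B ^ 2) by (apply pow_R1_Rle; lra).
    assert (Hb2 : 1 <= bb ^ 2) by (apply pow_R1_Rle; lra).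
    assert (HNC : 0 <= N * C ^ 2) by (apply Rmult_le_pos; auto; apply pow2_ge_0).
    set (u := kk ^ 3 * gamma ^ 4 * bb ^ 2) in *.
    assert (Zu : Z = u * B ^ 2) by (unfold Z, u; ring).
    assert (Hu : kk ^ 3 * gamma ^ 2 <= u).
    { unfold u. replace (gamma ^ 4) with (gamma ^ 2 * gamma ^ 2) by ring.
      assert (0 <= kk^3 * gamma^2) by nra. 
      assert (kk ^ 3 * gamma ^ 2 * 1 <= kk ^ 3 * gamma ^ 2 * (gamma ^ 2 * bb ^ 2)).
      { apply Rmult_le_compat_l; nra. } nra. }
    assert (0 <= u) by (pose proof Hk3; nra).
    assert (u <= Z) by (rewrite Zu; nra).
    assert (N * C ^ 2 * u <= N * C ^ 2 * Z) by (apply Rmult_le_compat_l; auto).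
    unfold c. replace (C ^ 2 * N) with (N * C ^ 2) by ring. nra. }
  assert (Hc : 16 <= c).
  { unfold c. assert (0 <= C^2 * N) by (apply Rmult_le_pos; auto; apply pow2_ge_0). lra. }
  assert (HZ : 0 <= Z).
  { unfold Z. apply Rmult_le_pos; [apply Rmult_le_pos; [apply Rmult_le_pos|]|]; apply pow_le; lra. }
  pose proof (sqrt_pos kk). pose proof (sqrt_sqrt kk ltac:(lra)).
  set (R0 := c * (kk * sqrt kk) * gamma ^ 2 * (B * bb)).
  assert (HR0 : 0 <= R0).
  { unfold R0. apply Rmult_le_pos; [apply Rmult_le_pos; [apply Rmult_le_pos|]|]; try nra.
    all: try (apply Rmult_le_pos; lra). all: try (apply pow_le; lra). }
  assert (ER : R0 ^ 2 = c ^ 2 * Z).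
  { unfold R0, Z. replace ((c * (kk * sqrt kk) * gamma ^ 2 * (B * bb)) ^ 2) with
      (c ^ 2 * kk ^ 2 * (sqrt kk * sqrt kk) * gamma ^ 4 * B ^ 2 * bb ^ 2) by ring.
    rewrite H0. ring. }
  rewrite <- (sqrt_pow2 R0 HR0). apply sqrt_le_1_alt. rewrite ER.
  assert (c * Z <= c ^ 2 * Z).
  { replace (c ^ 2 * Z) with (c * (c * Z)) by ring. 
    assert (0 <= c * Z) by nra. nra. }
  lra.
Qed.
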